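(* Let $0<\alpha<\eta$ with $\alpha\notin\mathbb N$. Let $D\subseteq\mathbb R^d$ be such that for all $x,y\in D$ with $x\ne y$ it holds $y+\sum_{j=1}^d(\rho_j\,d(x,y))^{\mathfrak s_j}\mathbf e_j\in D$ for all $\rho=(\rho_1,\dots,\rho_d)\in\mathbb N^d$. Assume $U$ is a germ over $D$ with $\|U\|_{G^\eta(D)}+[U]_{G^{\eta,\alpha}(D)}<\infty$. Then for all $R>0$, $$\sup_{x\in D}[U_x]_{C^\alpha(D\cap B_R(x))}\lesssim_{\mathfrak s,d,\eta,\alpha}\big(\|U\|_{G^\eta(D)}+[U]_{G^{\eta,\alpha}(D)}\big)R^{\eta-\alpha}.$$
   Context: Fix a scaling $\mathfrak s\in\mathbb N^d$; $\mathbb N=\{1,2,\dots\}$; for $\beta\in\mathbb N_0^d$, $|\beta|:=\sum_i\mathfrak s_i\beta_i$; $d(x,y):=\sum_i|x_i-y_i|^{1/\mathfrak s_i}$, $B_R(x)$ the open ball for $d$, $\mathcal P_k$ the polynomials $\sum_{|\beta|\le k}c_\beta z^\beta$. A germ over $D$ is a family $U=(U_x)_{x\in D}$ of continuous $U_x:D\to\mathbb C$; $\|U\|_{G^\eta(D)}$ is the infimum of $M>0$ with $|U_x(y)|\le M\,d(x,y)^\eta$ for all $x,y\in D$; $[U]_{G^{\eta,\alpha}(D)}$ is the infimum of $M>0$ such that for all $x,y\in D$ there is $P\in\mathcal P_{\lfloor\eta\rfloor}$ with $|(U_x-U_y-P)(z)|\le M\,d(y,z)^\alpha(d(x,y)+d(y,z))^{\eta-\alpha}$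 for all $z\in D$. For $A\subseteq\mathbb R^d$ and a function $f$ on $A$, $[f]_{C^\alpha(A)}$ is the infimum of all $M>0$ such that for every $y\in A$ there is $P\in\mathcal P_{\lfloor\alpha\rfloor}$ with $|f(z)-P(z)|\le M\,d(z,y)^\alpha$ for all $z\in A$. *)

(* Defs.v *)
From Stdlib Require Import Reals.
From Coquelicot Require Import Coquelicot.
From mathcomp Require Import ssreflect ssrfun ssrbool eqtype ssrnat seq
  choice fintype finfun bigop.

Set Implicit Arguments.
Unset Strict Implicit.
Unset Printing Implicit Defensive.

Local Open Scope R_scope.

Definition pt (d : nat) := 'I_d -> R.

(* a^b for a >= 0 with the convention 0^b = 0 (only used with b > 0) *)
Definition rpow (a b : R) : R := if Rlt_dec 0 a then Rpower a b else 0.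

Definition sdist (d : nat) (s : 'I_d -> nat) (x y : pt d) : R :=
  \big[Rplus/0]_(i < d) rpow (Rabs (x i - y i)) (/ INR (s i)).

Definition sball (d : nat) (s : 'I_d -> nat) (x : pt d) (r : R) (y : pt d) : Prop :=
  sdist s x y < r.

Definition sdeg (d : nat) (s : 'I_d -> nat) (b : 'I_d -> nat) : nat :=
  (\sum_(i < d) s i * b i)%N.

Definition floorR (a : R) : nat := Z.to_nat (Int_part a).

(* Every multi-index
   with |beta| <= k has beta_i <= k (since s_i >= 1), so beta ranges over
   {ffun 'I_d -> 'I_k.+1}; every element of P_k is of the form polyP s k c. *)
Definition polyP (d : nat) (s : 'I_d -> nat) (k : nat)
  (c : {ffun 'I_d -> 'I_k.+1} -> C) (z : pt d) : C :=
  \big[Cplus/RtoC 0]_(b : {ffun 'I_d -> 'I_k.+1} | (sdeg s (fun i => nat_of_ord (b i)) <= k)%N)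
     Cmult (c b) (RtoC (\big[Rmult/1]_(i < d) (z i ^ nat_of_ord (b i)))).

Definition germ (d : nat) (s : 'I_d -> nat) (D : pt d -> Prop)
  (U : pt d -> pt d -> C) : Prop :=
  forall x y, D x -> D y -> forall eps, 0 < eps ->
    exists del, 0 < del /\
      forall z, D z -> sdist s y z < del -> Cmod (Cminus (U x z) (U x y)) < eps.

Definition Gnorm (d : nat) (s : 'I_d -> nat) (D : pt d -> Prop) (eta : R)
  (U : pt d -> pt d -> C) : Rbar :=
  Glb_Rbar (fun M => 0 < M /\
    forall x y, D x -> D y -> Cmod (U x y) <= M * rpow (sdist s x y) eta).

Definition Gsemi (d : nat) (s : 'I_d -> nat) (D : pt d -> Prop) (eta alpha : R)
  (U : pt d -> pt d -> C) : Rbar :=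
  Glb_Rbar (fun M => 0 < M /\
    forall x y, D x -> D y ->
      exists c : {ffun 'I_d -> 'I_(floorR eta).+1} -> C,
        forall z, D z ->
          Cmod (Cminus (Cminus (U x z) (U y z)) (polyP s c z))
            <= M * rpow (sdist s y z) alpha
                 * rpow (sdist s x y + sdist s y z) (eta - alpha)).

Definition Holder (d : nat) (s : 'I_d -> nat) (A : pt d -> Prop) (alpha : R)
  (f : pt d -> C) : Rbar :=
  Glb_Rbar (fun M => 0 < M /\
    forall y, A y ->
      exists c : {ffun 'I_d -> 'I_(floorR alpha).+1} -> C,
        forall z, A z ->
          Cmod (Cminus (f z) (polyP s c z)) <= M * rpow (sdist s z y) alpha).

(* Main.v *)
From HB Require Import structures.
Require Import Defs.
From Stdlib Require Import Reals Lra Lia ZArith Classical FunctionalExtensionality.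
From Coquelicot Require Import Coquelicot.
From mathcomp Require Import ssreflect ssrfun ssrbool eqtype ssrnat seq
  choice fintype finfun bigop.
Set Implicit Arguments. Unset Strict Implicit. Unset Printing Implicit Defensive.
Local Open Scope R_scope.

Lemma Rplus_A : associative Rplus. Proof. move=>*; ring. Qed.
Lemma Rplus_C : commutative Rplus. Proof. move=>*; ring. Qed.
Lemma Rplus_0l : left_id 0 Rplus. Proof. move=>*; ring. Qed.
Lemma Rmult_A : associative Rmult. Proof. move=>*; ring. Qed.
Lemma Rmult_C : commutative Rmult. Proof. move=>*; ring. Qed.
Lemma Rmult_1l : left_id 1 Rmult. Proof. move=>*; ring. Qed.
HB.instance Definition _ := Monoid.isComLaw.Build R 0 Rplus Rplus_A Rplus_C Rplus_0l.
HB.instance Definition _ := Monoid.isComLaw.Build R 1 Rmult Rmult_A Rmult_C Rmult_1l.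
Lemma Rmult_0l' : left_zero 0 Rmult. Proof. move=>*; ring. Qed.
Lemma Rmult_0r' : right_zero 0 Rmult. Proof. move=>*; ring. Qed.
HB.instance Definition _ := Monoid.isMulLaw.Build R 0 Rmult Rmult_0l' Rmult_0r'.
Lemma RDl : left_distributive Rmult Rplus. Proof. move=>*; ring. Qed.
Lemma RDr : right_distributive Rmult Rplus. Proof. move=>*; ring. Qed.
HB.instance Definition _ := Monoid.isAddLaw.Build R Rmult Rplus RDl RDr.

Lemma Cplus_A : associative Cplus. Proof. move=>*; apply Cplus_assoc. Qed.
Lemma Cplus_C : commutative Cplus. Proof. move=>*; apply Cplus_comm. Qed.
Lemma Cplus_0l : left_id (RtoC 0) Cplus. Proof. move=>*; apply Cplus_0_l. Qed.
Lemma Cmult_A : associative Cmult. Proof. move=>*; apply Cmult_assoc. Qed.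
Lemma Cmult_C : commutative Cmult. Proof. move=>*; apply Cmult_comm. Qed.
Lemma Cmult_1l : left_id (RtoC 1) Cmult. Proof. move=>*; apply Cmult_1_l. Qed.
HB.instance Definition _ := Monoid.isComLaw.Build C (RtoC 0) Cplus Cplus_A Cplus_C Cplus_0l.
HB.instance Definition _ := Monoid.isComLaw.Build C (RtoC 1) Cmult Cmult_A Cmult_C Cmult_1l.
Lemma Cmult_0l' : left_zero (RtoC 0) Cmult. Proof. move=>*; apply Cmult_0_l. Qed.
Lemma Cmult_0r' : right_zero (RtoC 0) Cmult. Proof. move=>*; apply Cmult_0_r. Qed.
HB.instance Definition _ := Monoid.isMulLaw.Build C (RtoC 0) Cmult Cmult_0l' Cmult_0r'.
Lemma CDl : left_distributive Cmult Cplus. Proof. move=>*; apply Cmult_plus_distr_r. Qed.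
Lemma CDr : right_distributive Cmult Cplus. Proof. move=>*; apply Cmult_plus_distr_l. Qed.
HB.instance Definition _ := Monoid.isAddLaw.Build C Cmult Cplus CDl CDr.
Goal forall (f g : nat -> C), \big[Cplus/RtoC 0]_(i < 3) (Cplus (f i) (g i)) = Cplus (\big[Cplus/RtoC 0]_(i < 3) f i) (\big[Cplus/RtoC 0]_(i < 3) g i).
move=> f g. by rewrite big_split. Qed.
Goal forall (f : nat -> C) c, Cmult c (\big[Cplus/RtoC 0]_(i < 3) f i) = \big[Cplus/RtoC 0]_(i < 3) Cmult c (f i).
move=> f c. by rewrite big_distrr. Qed.


Lemma Rpower_pos a b : 0 < Rpower a b.
Proof. rewrite /Rpower; apply exp_pos. Qed.

Lemma rpow_ge0 a b : 0 <= rpow a b.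
Proof. rewrite /rpow; case: Rlt_dec => h /=; [apply Rlt_le, Rpower_pos| lra]. Qed.

Lemma rpowP a b : 0 < a -> rpow a b = Rpower a b.
Proof. rewrite /rpow; case: Rlt_dec => //= ?; lra. Qed.

Lemma rpow0 a b : a <= 0 -> rpow a b = 0.
Proof. rewrite /rpow; case: Rlt_dec => //= ?; lra. Qed.

Lemma rpow_pos a b : 0 < a -> 0 < rpow a b.
Proof. move=> h; rewrite rpowP //; apply Rpower_pos. Qed.

Lemma rpow_le_base a b e : 0 <= a <= b -> 0 <= e -> rpow a e <= rpow b e.
Proof.
move=> [h1 h2] he. case: (Rle_lt_dec a 0) => ha.
  rewrite (rpow0 _ ha); apply rpow_ge0.
rewrite !rpowP; try lra. apply Rle_Rpower_l; lra.
Qed.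

Lemma rpow_mul_base a b e : 0 <= a -> 0 <= b -> rpow (a * b) e = rpow a e * rpow b e.
Proof.
move=> ha hb. case: (Rle_lt_dec a 0) => ha'.
  have -> : a = 0 by lra. rewrite Rmult_0_l !(rpow0 (a:=0)); lra.
case: (Rle_lt_dec b 0) => hb'.
  have -> : b = 0 by lra. rewrite Rmult_0_r !(rpow0 (a:=0)); lra.
rewrite !rpowP //; last by apply Rmult_lt_0_compat.
by rewrite Rpower_mult_distr.
Qed.

Lemma rpow_add_exp a e1 e2 : 0 <= a -> rpow a (e1 + e2) = rpow a e1 * rpow a e2.
Proof.
move=> ha. case: (Rle_lt_dec a 0) => ha'.
  rewrite !rpow0 //; lra.
by rewrite !rpowP // Rpower_plus.
Qed.

Lemma rpow_pow a n : 0 <= a -> (0 < n)%nat -> rpow a (INR n) = a ^ n.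
Proof.
move=> ha hn. case: (Rle_lt_dec a 0) => ha'.
  have -> : a = 0 by lra. rewrite rpow0; last lra.
  case: n hn => // n _ /=; ring.
by rewrite rpowP // Rpower_pow.
Qed.

Lemma INR_posn (n : nat) : (0 < n)%nat -> 0 < INR n.
Proof. move=> h; apply lt_0_INR; apply/ltP. done. Qed.

Lemma rpow_inv_pow a (n : nat) : 0 <= a -> (0 < n)%nat -> (rpow a (/ INR n)) ^ n = a.
Proof.
move=> ha hn. have hN := INR_posn hn. case: (Rle_lt_dec a 0) => ha'.
  have -> : a = 0 by lra. rewrite rpow0; last lra.
  case: n hn {hN} => // n _ /=; ring.
rewrite rpowP // -Rpower_pow; last apply Rpower_pos.
rewrite Rpower_mult Rinv_l; last lra. by rewrite Rpower_1.
Qed.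

Lemma rpow_pow_inv a (n : nat) : 0 <= a -> (0 < n)%nat -> rpow (a ^ n) (/ INR n) = a.
Proof.
move=> ha hn. have hN := INR_posn hn. case: (Rle_lt_dec a 0) => ha'.
  have -> : a = 0 by lra. rewrite rpow0 //.
  case: n hn {hN} => // n _ /=; lra.
rewrite rpowP; last by apply pow_lt.
rewrite -Rpower_pow // Rpower_mult Rinv_r; last lra. by rewrite Rpower_1.
Qed.

Lemma rpow_split t B a e : 0 <= t <= B -> 0 < B -> a <= e ->
  rpow t e <= rpow t a * rpow B (e - a).
Proof.
move=> [h1 h2] hB hae. case: (Rle_lt_dec t 0) => ht.
  rewrite !(rpow0 (a:=t)) //; lra.
have -> : e = a + (e - a) by ring. rewrite rpow_add_exp; last lra.
have -> : a + (e - a) - a = e - a by ring.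
apply Rmult_le_compat_l; first apply rpow_ge0.
apply rpow_le_base; lra.
Qed.

Lemma pow_split t B a (m : nat) : 0 <= t <= B -> 0 < B -> 0 < a -> a <= INR m ->
  t ^ m <= rpow t a * rpow B (INR m - a).
Proof.
move=> ht hB ha hm. have hm0 : (0 < m)%nat.
  case: m hm => //= h; lra.
rewrite -rpow_pow //; last lra. by apply rpow_split.
Qed.

Lemma sum_ge0 (I : Type) (r : seq I) (P : pred I) (F : I -> R) :
  (forall i, P i -> 0 <= F i) -> 0 <= \big[Rplus/0]_(i <- r | P i) F i.
Proof. move=> h. apply big_ind => //; [lra| move=>*; lra]. Qed.

Lemma sum_le (I : Type) (r : seq I) (P : pred I) (F G : I -> R) :
  (forall i, P i -> F i <= G i) ->
  \big[Rplus/0]_(i <- r | P i) F i <= \big[Rplus/0]_(i <- r | P i) G i.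
Proof. move=> h. apply big_ind2 => //; [lra| move=>*; lra]. Qed.

Lemma sdist_ge0 d (s : 'I_d -> nat) x y : 0 <= sdist s x y.
Proof. apply sum_ge0 => i _; apply rpow_ge0. Qed.

Lemma sdist_sym d (s : 'I_d -> nat) x y : sdist s x y = sdist s y x.
Proof. rewrite /sdist; apply eq_bigr => i _; by rewrite Rabs_minus_sym. Qed.

Lemma pow_superadd u v n : 0 <= u -> 0 <= v -> u ^ n.+1 + v ^ n.+1 <= (u + v) ^ n.+1.
Proof.
move=> hu hv; elim: n => [|n IH] /=; first lra.
have h1 : 0 <= u * (u * u ^ n) by repeat apply Rmult_le_pos => //; apply pow_le.
have hun := pow_le u n hu. have hvn := pow_le v n hv.
have hun1 : 0 <= u * u ^ n by apply Rmult_le_pos.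
have hvn1 : 0 <= v * v ^ n by apply Rmult_le_pos.
have : (u + v) * (u * u ^ n + v * v ^ n) <= (u + v) * ((u + v) * (u + v) ^ n).
  apply Rmult_le_compat_l; [lra| exact IH].
have : 0 <= u * (v * v ^ n) + v * (u * u ^ n).
  apply Rplus_le_le_0_compat; apply Rmult_le_pos => //.
nra.
Qed.

Lemma rpow_subadd a b (n : nat) : (0 < n)%nat ->
  rpow (Rabs (a + b)) (/ INR n) <= rpow (Rabs a) (/ INR n) + rpow (Rabs b) (/ INR n).
Proof.
move=> hn. have hN := INR_posn hn.
set u := rpow (Rabs a) _. set v := rpow (Rabs b) _.
have hu : 0 <= u by apply rpow_ge0. have hv : 0 <= v by apply rpow_ge0.
have hinv : 0 <= / INR n by apply Rlt_le, Rinv_0_lt_compat.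
rewrite -(@rpow_pow_inv (u + v) n ltac:(lra) hn).
apply rpow_le_base => //. split; first apply Rabs_pos.
apply Rle_trans with (Rabs a + Rabs b); first apply Rabs_triang.
clear hu hv hinv hN. case: n hn @u @v => // n _ u v.
rewrite -{1}(rpow_inv_pow (a := Rabs a) (n := n.+1)) //; last apply Rabs_pos.
rewrite -{1}(rpow_inv_pow (a := Rabs b) (n := n.+1)) //; last apply Rabs_pos.
by apply pow_superadd; apply rpow_ge0.
Qed.

Lemma sdist_tri d (s : 'I_d -> nat) (hs : forall i, (0 < s i)%nat) x y z :
  sdist s x z <= sdist s x y + sdist s y z.
Proof.
rewrite /sdist -big_split /=. apply sum_le => i _.
have -> : x i - z i = (x i - y i) + (y i - z i) by ring.
by apply rpow_subadd.
Qed.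

Lemma term_le_sum (I : finType) (F : I -> R) i :
  (forall j, 0 <= F j) -> F i <= \big[Rplus/0]_j F j.
Proof.
move=> h. rewrite (bigD1 i) //=.
have := @sum_ge0 _ (index_enum I) (fun j => j != i) F (fun j _ => h j). lra.
Qed.

Lemma coord_le d (s : 'I_d -> nat) (hs : forall i, (0 < s i)%nat) x y i :
  Rabs (x i - y i) <= (sdist s x y) ^ (s i).
Proof.
rewrite -(@rpow_inv_pow (Rabs (x i - y i)) (s i) (Rabs_pos _) (hs i)).
apply pow_incr. split; first apply rpow_ge0.
rewrite /sdist; apply (@term_le_sum _ (fun j => rpow (Rabs (x j - y j)) (/ INR (s j))) i) => j.
apply rpow_ge0.
Qed.

Lemma sdist_pos d (s : 'I_d -> nat) (hs : forall i, (0 < s i)%nat) x y :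
  x <> y -> 0 < sdist s x y.
Proof.
move=> hxy. case: (Rle_lt_dec (sdist s x y) 0) => // h.
exfalso; apply: hxy; apply functional_extensionality => i.
have := coord_le hs x y i. have := sdist_ge0 s x y => h0.
have -> : sdist s x y = 0 by lra.
have := hs i. case: (s i) => // n _ /=. rewrite Rmult_0_l => h1.
have := Rabs_pos (x i - y i) => h2.
have : Rabs (x i - y i) = 0 by lra.
move=> /Rabs_eq_0; lra.
Qed.

Lemma sdist_xx d (s : 'I_d -> nat) x : sdist s x x = 0.
Proof.
rewrite /sdist big1 // => i _. rewrite Rminus_diag Rabs_R0 rpow0 //; lra.
Qed.

Lemma sdist_grid d (s : 'I_d -> nat) (hs : forall i, (0 < s i)%nat) y (rho : 'I_d -> nat) lam :
  0 <= lam ->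
  sdist s y (fun j => y j + (INR (rho j) * lam) ^ (s j)) = \big[Rplus/0]_(j < d) (INR (rho j) * lam).
Proof.
move=> hl. rewrite /sdist; apply eq_bigr => j _.
have h0 : 0 <= INR (rho j) * lam by apply Rmult_le_pos => //; apply pos_INR.
have -> : y j - (y j + (INR (rho j) * lam) ^ s j) = - ((INR (rho j) * lam) ^ s j) by ring.
rewrite Rabs_Ropp Rabs_right; last by apply Rle_ge, pow_le.
by apply rpow_pow_inv.
Qed.


Section Poly.
Variables (d : nat) (s : 'I_d -> nat).
Hypothesis hs : forall i, (0 < s i)%nat.

Definition mono (y : pt d) (b : 'I_d -> nat) (z : pt d) : R :=
  \big[Rmult/1]_(i < d) (z i - y i) ^ (b i).

Definition evl (y : pt d) (l : seq (C * ('I_d -> nat))) (z : pt d) : C :=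
  \big[Cplus/RtoC 0]_(p <- l) Cmult p.1 (RtoC (mono y p.2 z)).

Definition RepL (y : pt d) (k : nat) (f : pt d -> C) : Prop :=
  exists l, all (fun p => (sdeg s p.2 <= k)%nat) l /\ forall z, f z = evl y l z.

Lemma RepL_ext y k f g : (forall z, f z = g z) -> RepL y k f -> RepL y k g.
Proof. move=> h [l [h1 h2]]; exists l; split => // z; by rewrite -h. Qed.

Lemma RepL_le y k k' f : (k <= k')%nat -> RepL y k f -> RepL y k' f.
Proof.
move=> hk [l [h1 h2]]; exists l; split => //.
elim: l h1 {h2} => //= p l IH /andP [hp hl]. rewrite IH // andbT.
exact: leq_trans hp hk.
Qed.

Lemma RepL_zero y k : RepL y k (fun _ => RtoC 0).
Proof. exists [::]; split => // z; by rewrite /evl big_nil. Qed.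

Lemma RepL_add y k f g : RepL y k f -> RepL y k g -> RepL y k (fun z => Cplus (f z) (g z)).
Proof.
move=> [l1 [h1 e1]] [l2 [h2 e2]]; exists (l1 ++ l2); split.
  by rewrite all_cat h1 h2.
move=> z; by rewrite /evl big_cat /= e1 e2.
Qed.

Lemma RepL_scale y k c f : RepL y k f -> RepL y k (fun z => Cmult c (f z)).
Proof.
move=> [l [h1 e1]]; exists [seq (Cmult c p.1, p.2) | p <- l]; split.
  by rewrite all_map.
move=> z; rewrite /evl big_map e1 /evl big_distrr /=.
apply eq_bigr => p _; by rewrite Cmult_A.
Qed.

Lemma RepL_single y k c b : (sdeg s b <= k)%nat ->
  RepL y k (fun z => Cmult c (RtoC (mono y b z))).
Proof.
move=> hb; exists [:: (c, b)]; split; first by rewrite /= hb.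
move=> z; by rewrite /evl big_cons big_nil /= Cplus_C Cplus_0l.
Qed.

Lemma RepL_big y k (I : Type) (r : seq I) (P : pred I) (F : I -> pt d -> C) :
  (forall i, P i -> RepL y k (F i)) ->
  RepL y k (fun z => \big[Cplus/RtoC 0]_(i <- r | P i) F i z).
Proof.
move=> h; elim: r => [|i r IH].
  apply: RepL_ext (RepL_zero y k) => z; by rewrite big_nil.
case hP: (P i).
  apply: RepL_ext (RepL_add (h i hP) IH) => z; by rewrite big_cons hP.
apply: RepL_ext IH => z; by rewrite big_cons hP.
Qed.

Definition bumpi (i : 'I_d) (b : 'I_d -> nat) : 'I_d -> nat := fun j => (b j + (j == i))%nat.

Lemma sdeg_bump i b : sdeg s (bumpi i b) = (sdeg s b + s i)%nat.
Proof.
rewrite /sdeg /bumpi.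
under eq_bigr => j _ do rewrite mulnDr.
rewrite big_split /=. congr addn.
rewrite (bigD1 i) //= eqxx muln1 big1 ?addn0 // => j hj.
by rewrite (negbTE hj) muln0.
Qed.

Lemma mono_bump y i b z : mono y (bumpi i b) z = (z i - y i) * mono y b z.
Proof.
rewrite /mono /bumpi.
under eq_bigr => j _ do rewrite pow_add.
rewrite big_split /= Rmult_C. congr Rmult.
rewrite (bigD1 i) //= eqxx /= big1 => [|j hj]; first ring.
by rewrite (negbTE hj).
Qed.

Lemma RepL_mulvar y k i f : RepL y k f ->
  RepL y (k + s i) (fun z => Cmult (RtoC (z i - y i)) (f z)).
Proof.
move=> [l [h1 e1]]; exists [seq (p.1, bumpi i p.2) | p <- l]; split.
  rewrite all_map. elim: l h1 {e1} => //= p l IH /andP [hp hl].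
  by rewrite IH // andbT sdeg_bump leq_add2r.
move=> z; rewrite /evl big_map e1 /evl big_distrr /=.
apply eq_bigr => p _; rewrite mono_bump RtoC_mult.
by rewrite Cmult_A (Cmult_C (RtoC _)) -Cmult_A.
Qed.

Lemma RepL_mulvar' y y' k i f : RepL y k f ->
  RepL y (k + s i) (fun z => Cmult (RtoC (z i - y' i)) (f z)).
Proof.
move=> h. have h1 := RepL_mulvar i h.
have h2 : RepL y (k + s i) (fun z => Cmult (RtoC (y i - y' i)) (f z)).
  apply: RepL_le (RepL_scale _ h). by rewrite leq_addr.
apply: RepL_ext (RepL_add h1 h2) => z.
rewrite -CDl -RtoC_plus. congr (Cmult (RtoC _)); ring.
Qed.

Lemma RepL_pow y y' k i n f : RepL y k f ->
  RepL y (k + s i * n) (fun z => Cmult (RtoC ((z i - y' i) ^ n)) (f z)).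
Proof.
move=> h; elim: n => [|n IH].
  rewrite muln0 addn0. apply: RepL_ext h => z /=. by rewrite Cmult_1l.
have := RepL_mulvar' y' i IH. rewrite mulnS (addnC (s i)) addnA.
apply RepL_ext => z /=. by rewrite Cmult_A -RtoC_mult.
Qed.

Lemma RepL_monoR y y' b (r : seq 'I_d) :
  RepL y (\big[addn/0%nat]_(i <- r) (s i * b i))%nat
    (fun z => RtoC (\big[Rmult/1]_(i <- r) (z i - y' i) ^ (b i))).
Proof.
elim: r => [|i r IH].
  rewrite big_nil. have := @RepL_single y 0%nat (RtoC 1) (fun _ => 0%nat).
  have hz : sdeg s (fun _ => 0%nat) = 0%nat by rewrite /sdeg big1 // => i _; rewrite muln0.
  rewrite hz => /(_ isT) h1; apply: RepL_ext h1 => z.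
  rewrite big_nil /mono big1 // Cmult_1l //.
rewrite big_cons addnC. have := RepL_pow y' i (b i) IH.
apply RepL_ext => z. by rewrite big_cons RtoC_mult.
Qed.

Lemma RepL_mono y y' b : RepL y (sdeg s b) (fun z => RtoC (mono y' b z)).
Proof. exact: RepL_monoR. Qed.

Lemma RepL_recenter y y' k f : RepL y k f -> RepL y' k f.
Proof.
move=> [l [h1 e1]]. apply: (RepL_ext (f := evl y l)) => [z|]; first by rewrite e1.
rewrite /evl. elim: l h1 {e1} => [_|p l IH /= /andP [hp hl]].
  apply: RepL_ext (RepL_zero _ _) => z; by rewrite big_nil.
apply: RepL_ext (RepL_add (RepL_scale p.1 (RepL_le hp (RepL_mono y' y p.2))) (IH hl)) => z.
by rewrite big_cons.
Qed.

Definition polyPc (y : pt d) (k : nat) (q : {ffun 'I_d -> 'I_k.+1} -> C) (z : pt d) : C :=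
  \big[Cplus/RtoC 0]_(b : {ffun 'I_d -> 'I_k.+1} | (sdeg s (fun i => nat_of_ord (b i)) <= k)%N)
     Cmult (q b) (RtoC (mono y (fun i => nat_of_ord (b i)) z)).

Lemma polyP_polyPc k (c : {ffun 'I_d -> 'I_k.+1} -> C) z : polyP s c z = polyPc (fun _ => 0) c z.
Proof.
rewrite /polyP /polyPc; apply eq_bigr => b _; congr (Cmult _ (RtoC _)).
rewrite /mono; apply eq_bigr => i _. by rewrite Rminus_0_r.
Qed.

Lemma RepL_polyPc y k (q : {ffun 'I_d -> 'I_k.+1} -> C) : RepL y k (polyPc y q).
Proof. apply RepL_big => b hb. exact: RepL_single. Qed.

Lemma le_sdeg b i : (b i <= sdeg s b)%nat.
Proof.
rewrite /sdeg (bigD1 i) //=. apply: leq_trans (leq_addr _ _).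
by rewrite leq_pmull.
Qed.

Lemma polyPc_of_RepL y k f : RepL y k f -> exists q, forall z, f z = polyPc y (k:=k) q z.
Proof.
move=> [l [h1 e1]]. suff [q hq] : exists q, forall z, evl y l z = polyPc y (k:=k) q z.
  exists q => z; by rewrite e1.
elim: l h1 {e1} => [|[c b] l IH] /=.
  exists (fun _ => RtoC 0) => z. rewrite /evl big_nil /polyPc big1 // => *.
  by rewrite Cmult_0l'.
move=> /andP [hb /IH [q hq]].
set b0 : {ffun 'I_d -> 'I_k.+1} := [ffun i => inord (b i)].
have hb0 : (fun i => nat_of_ord (b0 i)) = b.
  apply: FunctionalExtensionality.functional_extensionality => i.
  rewrite /b0 ffunE inordK //. rewrite ltnS. exact: leq_trans (le_sdeg b i) hb.
exists (fun b' => Cplus (q b') (if b' == b0 then c else RtoC 0)) => z.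
rewrite /evl big_cons /= -/(evl y l z) hq /polyPc.
under [in RHS]eq_bigr => b' _ do rewrite CDl.
rewrite big_split /= Cplus_C. congr Cplus.
rewrite (bigD1 b0) /=; last by rewrite hb0.
rewrite eqxx hb0 big1 => [|b' /andP [_ hb']]; first by rewrite Cplus_C Cplus_0l.
by rewrite (negbTE hb') Cmult_0l'.
Qed.

End Poly.


Lemma sumRB (I : Type) (r : seq I) (P : pred I) (F G : I -> R) :
  \big[Rplus/0]_(i <- r | P i) (F i - G i) =
  \big[Rplus/0]_(i <- r | P i) F i - \big[Rplus/0]_(i <- r | P i) G i.
Proof.
elim: r => [|i r IH]; first by rewrite !big_nil; ring.
rewrite !big_cons; case: (P i) => //; rewrite IH; ring.
Qed.

Lemma sum_f_R0_big f n : sum_f_R0 f n = \big[Rplus/0]_(i < n.+1) f i.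
Proof.
elim: n => [|n IH]; first by rewrite big_ord_recl big_ord0 /=; ring.
by rewrite /= IH [in RHS]big_ord_recr.
Qed.

Lemma binC_nn n : Binomial.C n n = 1.
Proof.
rewrite /Binomial.C Nat.sub_diag /=. field. apply INR_fact_neq_0.
Qed.

Lemma binC_Sn n : Binomial.C n.+1 n = INR n.+1.
Proof.
rewrite /Binomial.C. replace (Nat.sub (S n) n) with 1%nat by lia.
rewrite S_INR /= plus_INR mult_INR. field. apply INR_fact_neq_0. Qed.

Lemma pow_diff t m : (t + 1) ^ m - t ^ m = \big[Rplus/0]_(j < m) (Binomial.C m j * t ^ j).
Proof.
rewrite binomial sum_f_R0_big big_ord_recr /= binC_nn Nat.sub_diag /=.
have -> : forall a, a + 1 * t ^ m * 1 - t ^ m = a by move=> a; ring.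
apply: eq_bigr => j _. rewrite pow1; ring.
Qed.

Lemma sum_last (n : nat) (F G : nat -> R) :
  \big[Rplus/0]_(r < n.+1) ((if (r < n)%N then F r else 0) * G r) =
  \big[Rplus/0]_(r < n) (F r * G r).
Proof.
rewrite big_ord_recr /= ltnn Rmult_0_l Rplus_0_r.
apply eq_bigr => i _ /=. by rewrite ltn_ord.
Qed.

Definition shiftF (F : nat -> R) (r : nat) := if r is r'.+1 then F r' else 0.

Lemma sum_shift (n : nat) (F G : nat -> R) :
  \big[Rplus/0]_(r < n.+1) (shiftF F r * G r) =
  \big[Rplus/0]_(r < n) (F r * G r.+1).
Proof.
rewrite big_ord_recl /= Rmult_0_l Rplus_0_l. by apply eq_bigr.
Qed.

Lemma sum_scal (I : Type) (r : seq I) (P : pred I) (c : R) (F : I -> R) :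
  \big[Rplus/0]_(i <- r | P i) (c * F i) = c * \big[Rplus/0]_(i <- r | P i) F i.
Proof. by rewrite big_distrr. Qed.

Lemma extract E : exists W : nat -> nat -> R, forall e m, (e <= E)%N -> (m <= E)%N ->
  \big[Rplus/0]_(r < E.+1) (W e r * (INR r + 1) ^ m) = if m == e then 1 else 0.
Proof.
elim: E => [|E [W hW]].
  exists (fun _ _ => 1) => e m; rewrite !leqn0 => /eqP -> /eqP ->.
  rewrite big_ord_recl big_ord0 /=; ring.
pose T r := / INR E.+1 * (shiftF (W E) r - (if (r < E.+1)%N then W E r else 0)).
have hE : 0 < INR E.+1 by apply INR_posn.
have hT : forall m, (m <= E.+1)%N ->
    \big[Rplus/0]_(r < E.+2) (T r * (INR r + 1) ^ m) = if m == E.+1 then 1 else 0.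
  move=> m hm.
  have -> : \big[Rplus/0]_(r < E.+2) (T r * (INR r + 1) ^ m) =
     / INR E.+1 * (\big[Rplus/0]_(r < E.+2) (shiftF (W E) r * (INR r + 1) ^ m)
                 - \big[Rplus/0]_(r < E.+2) ((if (r < E.+1)%N then W E r else 0) * (INR r + 1) ^ m)).
    rewrite -sumRB -sum_scal; apply eq_bigr => r _; rewrite /T; ring.
  rewrite (sum_shift _ _ (fun r => (INR r + 1) ^ m)) (sum_last _ _ (fun r => (INR r + 1) ^ m)) -sumRB.
  have -> : \big[Rplus/0]_(i < E.+1) (W E i * (INR i.+1 + 1) ^ m - W E i * (INR i + 1) ^ m)
      = \big[Rplus/0]_(j < m) (Binomial.C m j * (if (j : nat) == E then 1 else 0)).
    have -> : \big[Rplus/0]_(i < E.+1) (W E i * (INR i.+1 + 1) ^ m - W E i * (INR i + 1) ^ m)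
       = \big[Rplus/0]_(i < E.+1) \big[Rplus/0]_(j < m) (Binomial.C m j * (W E i * (INR i + 1) ^ j)).
      apply eq_bigr => i _. rewrite -Rmult_minus_distr_l S_INR pow_diff big_distrr /=.
      apply eq_bigr => j _; ring.
    rewrite exchange_big /=. apply eq_bigr => j _.
    rewrite sum_scal hW //. have := ltn_ord j. move=> hj. exact: leq_trans (ltnSn _) (leq_trans hj hm) .
  case: (ltngtP m E.+1) hm => // [hmE _ | -> _].
    rewrite big1 ?Rmult_0_r // => j _. have hj : (j < E)%N := leq_trans (ltn_ord j) hmE.
    by rewrite (ltn_eqF hj) Rmult_0_r.
  rewrite big_ord_recr /= eqxx big1 => [|j _]; last by rewrite (ltn_eqF (ltn_ord j)) Rmult_0_r.
  rewrite binC_Sn -/(INR E.+1) Rplus_0_l Rmult_1_r Rinv_l //; lra.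
pose W' e := if e == E.+1 then T else
  fun r => (if (r < E.+1)%N then W e r else 0)
           - (\big[Rplus/0]_(r < E.+1) (W e r * (INR r + 1) ^ E.+1)) * T r.
exists W' => e m he hm. rewrite /W'. case: eqP => [-> | hne]; first exact: hT.
have heE : (e <= E)%N by rewrite -ltnS ltn_neqAle he andbT; apply/eqP.
set v := \big[Rplus/0]_(r < E.+1) (W e r * (INR r + 1) ^ E.+1).
have -> : \big[Rplus/0]_(r < E.+2) (((if (r < E.+1)%N then W e r else 0) - v * T r) * (INR r + 1) ^ m)
   = \big[Rplus/0]_(r < E.+2) ((if (r < E.+1)%N then W e r else 0) * (INR r + 1) ^ m)
     - v * \big[Rplus/0]_(r < E.+2) (T r * (INR r + 1) ^ m).
  rewrite -sum_scal -sumRB; apply eq_bigr => r _; ring.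
rewrite (sum_last _ _ (fun r => (INR r + 1) ^ m)) hT //.
case: (ltngtP m E.+1) hm => // [hmE _ | -> _].
  rewrite hW //; ring.
have -> : (E.+1 == e) = false by apply/eqP => h; apply: hne; rewrite h.
rewrite /v; ring.
Qed.


Lemma Cmod_sum (I : Type) (r : seq I) (P : pred I) (F : I -> C) :
  Cmod (\big[Cplus/RtoC 0]_(i <- r | P i) F i) <= \big[Rplus/0]_(i <- r | P i) Cmod (F i).
Proof.
elim: r => [|i r IH]; first by rewrite !big_nil Cmod_0; lra.
rewrite !big_cons; case: (P i) => //.
apply: Rle_trans (Cmod_triangle _ _) _; lra.
Qed.

Lemma RtoC_sum (I : Type) (r : seq I) (P : pred I) (F : I -> R) :
  RtoC (\big[Rplus/0]_(i <- r | P i) F i) = \big[Cplus/RtoC 0]_(i <- r | P i) RtoC (F i).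
Proof. apply: big_morph => //; move=> a b; by rewrite RtoC_plus. Qed.

Lemma prod_pow (I : Type) (r : seq I) (P : pred I) (x : R) (F : I -> nat) :
  \big[Rmult/1]_(i <- r | P i) x ^ (F i) = x ^ (\big[addn/0%nat]_(i <- r | P i) F i).
Proof.
elim: r => [|i r IH]; first by rewrite !big_nil.
rewrite !big_cons; case: (P i) => //. by rewrite IH pow_add.
Qed.

Section Grid.
Variables (d : nat) (s : 'I_d -> nat).
Hypothesis hs : forall i, (0 < s i)%nat.
Variable K : nat.

Definition zgrid (y : pt d) (lam : R) (rho : {ffun 'I_d -> 'I_K.+1}) : pt d :=
  fun j => y j + (INR (nat_of_ord (rho j)).+1 * lam) ^ (s j).

Lemma mono_grid y lam rho (b : 'I_d -> nat) :
  mono y b (zgrid y lam rho) =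
  lam ^ (sdeg s b) * \big[Rmult/1]_(i < d) (INR (rho i) + 1) ^ (s i * b i).
Proof.
rewrite /mono /sdeg -prod_pow -big_split /=. apply eq_bigr => i _.
rewrite /zgrid. have -> : y i + (INR (rho i).+1 * lam) ^ s i - y i = (INR (rho i).+1 * lam) ^ s i by ring.
rewrite -pow_mult Rpow_mult_distr S_INR. rewrite -!mulnE Rmult_comm. done.
Qed.

Lemma le_sdeg' (b : 'I_d -> nat) i : (s i * b i <= sdeg s b)%nat.
Proof. rewrite /sdeg (bigD1 i) //=. exact: leq_addr. Qed.

Lemma coef_bound : exists C4, 0 <= C4 /\
  forall (y : pt d) (lam V : R) (q : {ffun 'I_d -> 'I_K.+1} -> C) (beta : {ffun 'I_d -> 'I_K.+1}),
    0 < lam -> (sdeg s (fun i => nat_of_ord (beta i)) <= K)%nat ->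
    (forall rho, Cmod (polyPc s y q (zgrid y lam rho)) <= V) ->
    Cmod (q beta) * lam ^ (sdeg s (fun i => nat_of_ord (beta i))) <= C4 * V.
Proof.
have [W hW] := extract K.
pose w (beta rho : {ffun 'I_d -> 'I_K.+1}) := \big[Rmult/1]_(i < d) W (s i * beta i)%nat (rho i).
exists (\big[Rplus/0]_(beta : {ffun 'I_d -> 'I_K.+1}) \big[Rplus/0]_(rho : {ffun 'I_d -> 'I_K.+1}) Rabs (w beta rho)).
split. apply sum_ge0 => *; apply sum_ge0 => *; apply Rabs_pos.
move=> y lam V q beta hlam hbeta hV.
have key : forall b : {ffun 'I_d -> 'I_K.+1}, (sdeg s (fun i => nat_of_ord (b i)) <= K)%nat ->
   \big[Rplus/0]_(rho : {ffun 'I_d -> 'I_K.+1}) (w beta rho * mono y (fun i => nat_of_ord (b i)) (zgrid y lam rho))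
   = lam ^ (sdeg s (fun i => nat_of_ord (b i))) * (if b == beta then 1 else 0).
  move=> b hb.
  under eq_bigr => rho _ do rewrite mono_grid.
  have -> : \big[Rplus/0]_(rho : {ffun 'I_d -> 'I_K.+1})
     (w beta rho * (lam ^ sdeg s (fun i => nat_of_ord (b i)) *
        \big[Rmult/1]_(i < d) (INR (rho i) + 1) ^ (s i * b i)))
     = lam ^ sdeg s (fun i => nat_of_ord (b i)) *
       \big[Rplus/0]_(rho : {ffun 'I_d -> 'I_K.+1}) \big[Rmult/1]_(i < d)
          (W (s i * beta i)%nat (rho i) * (INR (rho i) + 1) ^ (s i * b i)).
    rewrite -sum_scal; apply eq_bigr => rho _. rewrite /w big_split /=. ring.
  congr Rmult.
  rewrite -(bigA_distr_bigA (fun (i : 'I_d) (r : 'I_K.+1) => W (s i * beta i)%nat r * (INR r + 1) ^ (s i * b i))) /=.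
  have -> : \big[Rmult/1]_(i < d) \big[Rplus/0]_(j < K.+1) (W (s i * beta i)%nat j * (INR j + 1) ^ (s i * b i))
     = \big[Rmult/1]_(i < d) (if (s i * b i == s i * beta i)%nat then 1 else 0).
    apply eq_bigr => i _. apply hW.
      exact: leq_trans (le_sdeg' (fun i => nat_of_ord (beta i)) i) hbeta.
    exact: leq_trans (le_sdeg' (fun i => nat_of_ord (b i)) i) hb.
  case: eqP => [-> | hne].
    rewrite big1 // => i _. by rewrite eqxx.
  have [i hi] : exists i, (s i * b i != s i * beta i)%nat.
    case: (pickP (fun i => (s i * b i != s i * beta i)%nat)) => [i hi | h]; first by exists i.
    exfalso; apply: hne. apply/ffunP => i.
    apply: val_inj. have := h i. move=> /negbFE. rewrite eqn_pmul2l //. by move/eqP.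
  rewrite (bigD1 i) //= (negbTE hi). ring.
have id : \big[Cplus/RtoC 0]_(rho : {ffun 'I_d -> 'I_K.+1})
      Cmult (RtoC (w beta rho)) (polyPc s y q (zgrid y lam rho))
    = Cmult (q beta) (RtoC (lam ^ (sdeg s (fun i => nat_of_ord (beta i))))).
  rewrite /polyPc.
  under eq_bigr => rho _ do rewrite big_distrr.
  rewrite exchange_big /=.
  have -> : \big[Cplus/RtoC 0]_(b : {ffun 'I_d -> 'I_K.+1} | (sdeg s (fun i => nat_of_ord (b i)) <= K)%nat)
      \big[Cplus/RtoC 0]_(rho : {ffun 'I_d -> 'I_K.+1})
        Cmult (RtoC (w beta rho)) (Cmult (q b) (RtoC (mono y (fun i => nat_of_ord (b i)) (zgrid y lam rho))))
     = \big[Cplus/RtoC 0]_(b : {ffun 'I_d -> 'I_K.+1} | (sdeg s (fun i => nat_of_ord (b i)) <= K)%nat)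
        Cmult (q b) (RtoC (lam ^ (sdeg s (fun i => nat_of_ord (b i))) * (if b == beta then 1 else 0))).
    apply eq_bigr => b hb. rewrite -(key b hb) RtoC_sum big_distrr /=.
    apply eq_bigr => rho _. rewrite RtoC_mult. by rewrite Cmult_A (Cmult_C (RtoC _) (q b)) -Cmult_A.
  rewrite (bigD1 beta) //= eqxx big1 => [|b /andP [_ hb]].
    by rewrite Rmult_1_r Cplus_C Cplus_0l.
  by rewrite (negbTE hb) Rmult_0_r Cmult_0r'.
have hlp : 0 <= lam ^ (sdeg s (fun i => nat_of_ord (beta i))) by apply pow_le; lra.
have -> : Cmod (q beta) * lam ^ (sdeg s (fun i => nat_of_ord (beta i)))
   = Cmod (Cmult (q beta) (RtoC (lam ^ (sdeg s (fun i => nat_of_ord (beta i)))))).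
  by rewrite Cmod_mult Cmod_R Rabs_right //; lra.
rewrite -id. apply: Rle_trans (Cmod_sum _ _ _) _.
apply Rle_trans with (\big[Rplus/0]_(rho : {ffun 'I_d -> 'I_K.+1}) (Rabs (w beta rho) * V)).
  apply sum_le => rho _. rewrite Cmod_mult Cmod_R.
  apply Rmult_le_compat_l; [apply Rabs_pos | apply hV].
have hV0 : 0 <= V by apply: Rle_trans (Cmod_ge_0 _) (hV beta).
rewrite -big_distrl /=. apply Rmult_le_compat_r => //.
apply (@term_le_sum _ (fun beta => \big[Rplus/0]_(rho : {ffun 'I_d -> 'I_K.+1}) Rabs (w beta rho))) => b.
apply sum_ge0 => *; apply Rabs_pos.
Qed.
End Grid.


Lemma floorR_spec a : 0 <= a -> INR (floorR a) <= a < INR (floorR a) + 1.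
Proof.
move=> ha. have [h1 h2] := base_Int_part a.
have hz : (0 <= Int_part a)%Z.
  have : -1 < IZR (Int_part a) by lra.
  move=> h. have : (-1 < Int_part a)%Z by apply lt_IZR. lia.
rewrite /floorR INR_IZR_INZ Z2Nat.id //. lra.
Qed.

Lemma floorR_mono a b : 0 <= a -> a <= b -> (floorR a <= floorR b)%nat.
Proof.
move=> ha hab. have [h1 h2] := floorR_spec ha. have [h3 h4] := floorR_spec (Rle_trans _ _ _ ha hab).
case: (leqP (floorR a) (floorR b)) => // hlt.
have : (floorR b + 1 <= floorR a)%nat by rewrite addn1.
move=> /leP /le_INR. rewrite plus_INR /=. lra.
Qed.

Lemma Cmod_sub3 a b c : Cmod (Cminus (Cminus a b) c) <= Cmod a + Cmod b + Cmod c.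
Proof.
rewrite /Cminus. apply: Rle_trans (Cmod_triangle _ _) _.
rewrite Cmod_opp. have := Cmod_triangle a (Copp b). rewrite Cmod_opp. lra.
Qed.


Lemma prod_le (I : Type) (r : seq I) (P : pred I) (F G : I -> R) :
  (forall i, P i -> 0 <= F i <= G i) ->
  0 <= \big[Rmult/1]_(i <- r | P i) F i <= \big[Rmult/1]_(i <- r | P i) G i.
Proof.
move=> h. apply (big_ind2 (fun a b => 0 <= a <= b)); first lra.
  move=> a1 a2 b1 b2 [h1 h2] [h3 h4]; split; first by apply Rmult_le_pos.
  apply Rmult_le_compat => //.
exact h.
Qed.

Lemma Rabs_prod (I : Type) (r : seq I) (P : pred I) (F : I -> R) :
  Rabs (\big[Rmult/1]_(i <- r | P i) F i) = \big[Rmult/1]_(i <- r | P i) Rabs (F i).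
Proof. apply: big_morph; [move=> a b; apply Rabs_mult | apply Rabs_R1]. Qed.

Lemma mono_le d (s : 'I_d -> nat) (hs : forall i, (0 < s i)%nat) y z b :
  Rabs (mono y b z) <= (sdist s y z) ^ (sdeg s b).
Proof.
rewrite /mono Rabs_prod /sdeg -prod_pow.
have := @prod_le _ (index_enum 'I_d) xpredT (fun i => Rabs ((z i - y i) ^ b i))
   (fun i => sdist s y z ^ (s i * b i)%nat).
case => // i _. rewrite -RPow_abs. split; first by apply pow_le, Rabs_pos.
rewrite mulnE pow_mult. apply pow_incr. split; first by apply Rabs_pos.
rewrite Rabs_minus_sym. exact: coord_le.
Qed.

Lemma sum_filter_le (I : finType) (P : pred I) (F : I -> R) :
  (forall i, 0 <= F i) -> \big[Rplus/0]_(i | P i) F i <= \big[Rplus/0]_i F i.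
Proof.
move=> h. rewrite big_mkcond /=. apply sum_le => i _. case: (P i) => //. lra.
Qed.

Section Core.
Variables (d : nat) (s : 'I_d -> nat).
Hypothesis hs : forall i, (0 < s i)%nat.
Variables (eta alpha : R).
Hypothesis ha : 0 < alpha.
Hypothesis hae : alpha < eta.

Let K := floorR eta.
Let Pc := \big[Rplus/0]_(j < d) INR K.+1.
Let c1 := rpow (1 + Pc) eta.

Lemma Pc_ge0 : 0 <= Pc.
Proof. apply sum_ge0 => *; apply pos_INR. Qed.

Lemma grid_bound (D : pt d -> Prop) (U : pt d -> pt d -> C) Mn Ms x y
  (c : {ffun 'I_d -> 'I_K.+1} -> C) (rho : {ffun 'I_d -> 'I_K.+1}) :
  0 < Mn -> 0 < Ms ->
  (forall x y, D x -> D y -> Cmod (U x y) <= Mn * rpow (sdist s x y) eta) ->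
  (forall z, D z -> Cmod (Cminus (Cminus (U x z) (U y z)) (polyP s c z))
        <= Ms * rpow (sdist s y z) alpha * rpow (sdist s x y + sdist s y z) (eta - alpha)) ->
  D x -> D y -> D (zgrid s y (sdist s x y) rho) ->
  Cmod (polyP s c (zgrid s y (sdist s x y) rho)) <= (2 * Mn + Ms) * (rpow (sdist s x y) eta * c1).
Proof.
move=> hMn hMs hN hS hx hy hz.
set lam := sdist s x y. set z := zgrid s y lam rho.
have hl : 0 <= lam by apply sdist_ge0.
have hyz : sdist s y z <= lam * Pc.
  rewrite /z /zgrid sdist_grid // /Pc -sum_scal.
  apply sum_le => j _. rewrite (Rmult_comm lam). apply Rmult_le_compat_r => //. apply le_INR. apply/leP. exact: ltn_ord.
have hyz0 := sdist_ge0 s y z.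
have hP := Pc_ge0.
have hexp : lam * (1 + Pc) = lam + lam * Pc by ring.
have hlP : 0 <= lam * Pc by apply Rmult_le_pos.
have hxz : sdist s x z <= lam * (1 + Pc).
  have := sdist_tri hs x y z. rewrite -/lam. lra.
have hB : rpow (lam * (1 + Pc)) eta = rpow lam eta * c1.
  rewrite rpow_mul_base //; lra.
have e : polyP s c z = Cminus (Cminus (U x z) (U y z)) (Cminus (Cminus (U x z) (U y z)) (polyP s c z)).
  ring.
rewrite e. apply: Rle_trans (Cmod_sub3 _ _ _) _.
have h1 : Cmod (U x z) <= Mn * rpow (lam * (1 + Pc)) eta.
  apply: Rle_trans (hN _ _ hx hz) _. rewrite -/lam -/z. apply Rmult_le_compat_l; first lra.
  apply rpow_le_base; [split; [apply sdist_ge0| done] | lra].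
have h2 : Cmod (U y z) <= Mn * rpow (lam * (1 + Pc)) eta.
  apply: Rle_trans (hN _ _ hy hz) _. rewrite -/lam -/z. apply Rmult_le_compat_l; first lra.
  apply rpow_le_base; [split; [done| lra] | lra].
have h3 : Cmod (Cminus (Cminus (U x z) (U y z)) (polyP s c z)) <= Ms * rpow (lam * (1 + Pc)) eta.
  apply: Rle_trans (hS _ hz) _. rewrite -/lam -/z. rewrite Rmult_assoc. apply Rmult_le_compat_l; first lra.
  have -> : eta = alpha + (eta - alpha) by ring.
  rewrite rpow_add_exp; last lra. have -> : alpha + (eta - alpha) - alpha = eta - alpha by ring.
  apply Rmult_le_compat; try apply rpow_ge0.
    apply rpow_le_base; [split; [done| lra] | lra].
  apply rpow_le_base; [split; [lra| lra] | lra].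
rewrite -hB. lra.
Qed.

Lemma high_term (qb : C) (lam t Rr G C4' : R) (m : nat) :
  0 < lam < Rr -> 0 <= t <= 2 * Rr -> 0 < G -> 0 <= C4' ->
  alpha <= INR m -> INR m <= eta -> (m <= K)%nat ->
  Cmod qb * lam ^ m <= C4' * G * rpow lam eta ->
  Cmod qb * t ^ m <= C4' * G * 2 ^ K * rpow Rr (eta - alpha) * rpow t alpha.
Proof.
move=> [hl hlR] ht hG hC ham hme hmK hq.
have hlm : 0 < lam ^ m by apply pow_lt.
have hq' : Cmod qb <= C4' * G * rpow lam (eta - INR m).
  have e : rpow lam eta = rpow lam (eta - INR m) * lam ^ m.
    rewrite -rpow_pow //; last (case: m ham {hme hmK hq hlm} => /= [|n] h; [lra|done]).
    2: lra.
    rewrite -rpow_add_exp; last lra. congr rpow; ring.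
  rewrite e in hq. apply (Rmult_le_reg_r (lam ^ m)) => //. lra.
have htm := pow_split (conj (proj1 ht) (proj2 ht)) (ltac:(lra) : 0 < 2 * Rr) ha ham.
have h1 : rpow lam (eta - INR m) <= rpow Rr (eta - INR m).
  apply rpow_le_base; lra.
have h2 : rpow Rr (eta - INR m) * rpow (2 * Rr) (INR m - alpha)
          = rpow 2 (INR m - alpha) * rpow Rr (eta - alpha).
  rewrite rpow_mul_base; try lra.
  have -> : eta - alpha = (eta - INR m) + (INR m - alpha) by ring.
  rewrite (rpow_add_exp (eta - INR m)); last lra. ring.
have h3 : rpow 2 (INR m - alpha) <= 2 ^ K.
  rewrite rpowP; last lra. rewrite -Rpower_pow; last lra.
  apply Rle_Rpower; first lra.
  have : INR m <= INR K by apply le_INR; apply/leP.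
  lra.
have hqb := Cmod_ge_0 qb. have htm0 : 0 <= t ^ m by apply pow_le; lra.
have hr1 := rpow_ge0 lam (eta - INR m). have hr2 := rpow_ge0 Rr (eta - INR m).
have hr3 := rpow_ge0 (2 * Rr) (INR m - alpha). have hr4 := rpow_ge0 t alpha.
have hr5 := rpow_ge0 Rr (eta - alpha). have hr6 := rpow_ge0 2 (INR m - alpha).
have hCG : 0 <= C4' * G by apply Rmult_le_pos; lra.
apply Rle_trans with (C4' * G * rpow Rr (eta - INR m) * (rpow t alpha * rpow (2 * Rr) (INR m - alpha))).
  apply Rmult_le_compat => //. rewrite Rmult_assoc.
  apply: Rle_trans hq' _. rewrite Rmult_assoc. apply Rmult_le_compat_l => //.
  apply Rmult_le_compat_l => //; lra.
have -> : C4' * G * rpow Rr (eta - INR m) * (rpow t alpha * rpow (2 * Rr) (INR m - alpha))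
   = C4' * G * rpow t alpha * (rpow Rr (eta - INR m) * rpow (2 * Rr) (INR m - alpha)) by ring.
rewrite h2.
have -> : C4' * G * 2 ^ K * rpow Rr (eta - alpha) * rpow t alpha
   = C4' * G * rpow t alpha * (2 ^ K * rpow Rr (eta - alpha)) by ring.
apply Rmult_le_compat_l; first by apply Rmult_le_pos.
apply Rmult_le_compat_r => //.
Qed.

Lemma c1_ge0 : 0 <= c1.
Proof. apply rpow_ge0. Qed.

Lemma core : exists K0, 0 < K0 /\
  forall (D : pt d -> Prop) (U : pt d -> pt d -> C) Mn Ms Rr x y,
  (forall x y : pt d, D x -> D y -> x <> y ->
     forall rho : 'I_d -> nat, (forall j, (0 < rho j)%N) ->
       D (fun j => (y j + (INR (rho j) * sdist s x y) ^ (s j))%R)) ->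
  0 < Mn -> 0 < Ms ->
  (forall x y, D x -> D y -> Cmod (U x y) <= Mn * rpow (sdist s x y) eta) ->
  (forall x y, D x -> D y ->
      exists c : {ffun 'I_d -> 'I_(floorR eta).+1} -> C,
        forall z, D z ->
          Cmod (Cminus (Cminus (U x z) (U y z)) (polyP s c z))
            <= Ms * rpow (sdist s y z) alpha
                 * rpow (sdist s x y + sdist s y z) (eta - alpha)) ->
  0 < Rr -> D x -> D y -> sdist s x y < Rr ->
  exists c : {ffun 'I_d -> 'I_(floorR alpha).+1} -> C, forall z, D z -> sdist s x z < Rr ->
    Cmod (Cminus (U x z) (polyP s c z)) <= K0 * (Mn + Ms) * rpow Rr (eta - alpha) * rpow (sdist s z y) alpha.
Proof.
have [C4 [hC4 hcoef]] := coef_bound hs K.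
set NB := \big[Rplus/0]_(b : {ffun 'I_d -> 'I_K.+1}) 1.
have hNB : 0 <= NB by apply sum_ge0 => *; lra.
have hc1 := c1_ge0.
have h2K : 0 < 2 ^ K by apply pow_lt; lra.
set C5 := C4 * 2 * c1.
have hC5 : 0 <= C5 by rewrite /C5; apply Rmult_le_pos => //; lra.
have hX : 0 <= NB * (C5 * 2 ^ K) by apply Rmult_le_pos => //; apply Rmult_le_pos => //; lra.
have h3 := rpow_ge0 3 (eta - alpha). have h2 := rpow_ge0 2 (eta - alpha).
exists (rpow 3 (eta - alpha) + rpow 2 (eta - alpha) + NB * (C5 * 2 ^ K) + 1).
split; first lra.
move=> D U Mn Ms Rr x y hgrid hMn hMs hN hS hR hx hy hxyR.
set G := Mn + Ms. set E1 := rpow Rr (eta - alpha).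
have hE1 : 0 <= E1 by apply rpow_ge0.
case: (classic (x = y)) => [<- | hxy].
  exists (fun _ => RtoC 0) => z hz hxz.
  have -> : @polyP d s (floorR alpha) (fun _ => RtoC 0) z = RtoC 0.
    rewrite /polyP big1 // => b _; by rewrite Cmult_0l'.
  have -> : Cminus (U x z) (RtoC 0) = U x z by ring.
  apply: Rle_trans (hN _ _ hx hz) _.
  have hxz0 := sdist_ge0 s x z.
  have := @rpow_split (sdist s x z) Rr alpha eta (conj hxz0 (Rlt_le _ _ hxz)) hR (Rlt_le _ _ hae).
  rewrite (sdist_sym s x z) -/E1 => hsp.
  have ht := rpow_ge0 (sdist s z x) alpha.
  apply Rle_trans with (Mn * (rpow (sdist s z x) alpha * E1)).
    apply Rmult_le_compat_l; lra.
  have : 0 <= rpow (sdist s z x) alpha * E1 by apply Rmult_le_pos.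
  have : Mn <= (rpow 3 (eta - alpha) + rpow 2 (eta - alpha) + NB * (C5 * 2 ^ K) + 1) * G.
    rewrite /G; nra.
  nra.
have hl := sdist_pos hs hxy. set lam := sdist s x y in hl hxyR.
have [cQ hcQ] := hS x y hx hy.
have hRQ : RepL s y K (polyP s cQ).
  apply: (RepL_recenter y).
  apply: RepL_ext (RepL_polyPc s (fun _ => 0) cQ) => z. by rewrite polyP_polyPc.
have [q hq] := polyPc_of_RepL hs hRQ.
have hG : 0 < G by rewrite /G; lra.
have hcb : forall beta : {ffun 'I_d -> 'I_K.+1},
    (sdeg s (fun i => nat_of_ord (beta i)) <= K)%nat ->
    Cmod (q beta) * lam ^ (sdeg s (fun i => nat_of_ord (beta i))) <= C5 * G * rpow lam eta.
  move=> beta hb.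
  have := hcoef y lam ((2 * Mn + Ms) * (rpow lam eta * c1)) q beta hl hb.
  have hV : forall rho : {ffun 'I_d -> 'I_K.+1}, Cmod (polyPc s y q (zgrid s y lam rho)) <= (2 * Mn + Ms) * (rpow lam eta * c1).
    move=> rho. rewrite -hq. have hgb := @grid_bound D U Mn Ms x y cQ rho hMn hMs hN (hcQ) hx hy. apply: hgb.
    apply: (hgrid x y hx hy hxy (fun j => (nat_of_ord (rho j)).+1)) => j //.
  move=> /(_ hV) hh. apply: Rle_trans hh _.
  have hrl := rpow_ge0 lam eta.
  rewrite /C5. have : (2 * Mn + Ms) <= 2 * G by rewrite /G; lra.
  have : 0 <= rpow lam eta * c1 by apply Rmult_le_pos.
  move=> h0 h1.
  have -> : C4 * 2 * c1 * G * rpow lam eta = C4 * ((2 * G) * (rpow lam eta * c1)) by ring.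
  apply Rmult_le_compat_l => //. apply Rmult_le_compat_r => //.
set A := floorR alpha.
pose T z := \big[Cplus/RtoC 0]_(b : {ffun 'I_d -> 'I_K.+1} |
     (sdeg s (fun i => nat_of_ord (b i)) <= K)%nat && (sdeg s (fun i => nat_of_ord (b i)) <= A)%nat)
     Cmult (q b) (RtoC (mono y (fun i => nat_of_ord (b i)) z)).
pose H z := \big[Cplus/RtoC 0]_(b : {ffun 'I_d -> 'I_K.+1} |
     (sdeg s (fun i => nat_of_ord (b i)) <= K)%nat && ~~ (sdeg s (fun i => nat_of_ord (b i)) <= A)%nat)
     Cmult (q b) (RtoC (mono y (fun i => nat_of_ord (b i)) z)).
have hTH : forall z, polyPc s y q z = Cplus (T z) (H z).
  move=> z. rewrite /polyPc (bigID (fun b : {ffun 'I_d -> 'I_K.+1} => (sdeg s (fun i => nat_of_ord (b i)) <= A)%nat)) /=.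
  done.
have hRT : RepL s (fun _ => 0) A T.
  apply: (RepL_recenter (fun _ => 0)). rewrite /T.
  apply: RepL_big => b /andP [_ hb]. exact: RepL_single.
have [c' hc'] := polyPc_of_RepL hs hRT.
exists c' => z hz hxz.
have hTz : polyP s c' z = T z by rewrite polyP_polyPc -hc'.
rewrite hTz.
set t := sdist s y z.
have ht0 : 0 <= t := sdist_ge0 s y z.
have ht2 : t <= 2 * Rr.
  have := sdist_tri hs y x z. rewrite (sdist_sym s y x) -/lam -/t. lra.
rewrite (sdist_sym s z y) -/t.
have hta := rpow_ge0 t alpha.
have e : Cminus (U x z) (T z) =
   Cplus (Cplus (Cminus (Cminus (U x z) (U y z)) (polyP s cQ z)) (U y z)) (H z).
  rewrite hq hTH. ring.
rewrite e.
apply: Rle_trans (Cmod_triangle _ _) _.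
apply: Rle_trans (Rplus_le_compat_r _ _ _ (Cmod_triangle _ _)) _.
have b1 : Cmod (Cminus (Cminus (U x z) (U y z)) (polyP s cQ z)) <= Ms * rpow 3 (eta - alpha) * E1 * rpow t alpha.
  apply: Rle_trans (hcQ z hz) _. rewrite -/lam -/t.
  have : rpow (lam + t) (eta - alpha) <= rpow 3 (eta - alpha) * E1.
    rewrite /E1 -rpow_mul_base; try lra. apply rpow_le_base; lra.
  move=> hh.
  have -> : Ms * rpow 3 (eta - alpha) * E1 * rpow t alpha = Ms * rpow t alpha * (rpow 3 (eta - alpha) * E1) by ring.
  apply Rmult_le_compat_l => //. apply Rmult_le_pos; lra.
have b2 : Cmod (U y z) <= Mn * rpow 2 (eta - alpha) * E1 * rpow t alpha.
  apply: Rle_trans (hN _ _ hy hz) _. rewrite -/t.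
  have := @rpow_split t (2 * Rr) alpha eta (conj ht0 ht2) ltac:(lra) (Rlt_le _ _ hae).
  rewrite rpow_mul_base; try lra. rewrite -/E1 => hh.
  have -> : Mn * rpow 2 (eta - alpha) * E1 * rpow t alpha = Mn * (rpow t alpha * (rpow 2 (eta - alpha) * E1)) by ring.
  apply Rmult_le_compat_l; lra.
have b3 : Cmod (H z) <= NB * (C5 * 2 ^ K * G * E1 * rpow t alpha).
  rewrite /H. apply: Rle_trans (Cmod_sum _ _ _) _.
  have hX0 : 0 <= C5 * 2 ^ K * G * E1 * rpow t alpha.
    repeat apply Rmult_le_pos => //; lra.
  apply Rle_trans with (\big[Rplus/0]_(b : {ffun 'I_d -> 'I_K.+1} |
     (sdeg s (fun i => nat_of_ord (b i)) <= K)%nat && ~~ (sdeg s (fun i => nat_of_ord (b i)) <= A)%nat)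
     (C5 * 2 ^ K * G * E1 * rpow t alpha)).
    apply sum_le => b /andP [hbK hbA].
    rewrite Cmod_mult Cmod_R.
    set m := sdeg s (fun i => nat_of_ord (b i)).
    have hmono := mono_le hs y z (fun i => nat_of_ord (b i)). rewrite -/t -/m in hmono.
    apply Rle_trans with (Cmod (q b) * t ^ m).
      apply Rmult_le_compat_l => //; apply Cmod_ge_0.
    have hA := floorR_spec (Rlt_le _ _ ha). have hK := floorR_spec (ltac:(lra) : 0 <= eta).
    have ham : alpha <= INR m.
      have : (A.+1 <= m)%nat by rewrite ltnNge.
      move=> /leP /le_INR. rewrite S_INR /A. lra.
    have hme : INR m <= eta.
      have : INR m <= INR K by apply le_INR; apply/leP.
      rewrite /K in hK *. lra.
    apply: Rle_trans (high_term (conj hl hxyR) (conj ht0 ht2) hG hC5 ham hme hbK (hcb b hbK)) _.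
    right; rewrite /E1; ring.
  apply Rle_trans with (\big[Rplus/0]_(b : {ffun 'I_d -> 'I_K.+1}) (C5 * 2 ^ K * G * E1 * rpow t alpha)).
    apply sum_filter_le => _; lra.
  have -> : \big[Rplus/0]_(b : {ffun 'I_d -> 'I_K.+1}) (C5 * 2 ^ K * G * E1 * rpow t alpha)
     = (C5 * 2 ^ K * G * E1 * rpow t alpha) * NB.
    rewrite /NB -sum_scal; apply eq_bigr => *; ring.
  right; ring.
have hP : 0 <= E1 * rpow t alpha by apply Rmult_le_pos.
have hid : (rpow 3 (eta - alpha) + rpow 2 (eta - alpha) + NB * (C5 * 2 ^ K) + 1) * G * E1 * rpow t alpha
   - (Ms * rpow 3 (eta - alpha) * E1 * rpow t alpha + Mn * rpow 2 (eta - alpha) * E1 * rpow t alpha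
      + NB * (C5 * 2 ^ K * G * E1 * rpow t alpha))
   = Mn * rpow 3 (eta - alpha) * (E1 * rpow t alpha) + Ms * rpow 2 (eta - alpha) * (E1 * rpow t alpha)
     + G * (E1 * rpow t alpha).
  rewrite /G; ring.
have p1 : 0 <= Mn * rpow 3 (eta - alpha) * (E1 * rpow t alpha).
  apply Rmult_le_pos => //; apply Rmult_le_pos; lra.
have p2 : 0 <= Ms * rpow 2 (eta - alpha) * (E1 * rpow t alpha).
  apply Rmult_le_pos => //; apply Rmult_le_pos; lra.
have p3 : 0 <= G * (E1 * rpow t alpha) by apply Rmult_le_pos; lra.
lra.
Qed.

End Core.


Notation RFin := Coquelicot.Rbar.Finite.

Lemma glb_nonneg (E : R -> Prop) : (forall M, E M -> 0 < M) -> Rbar_le (RFin 0) (Glb_Rbar E).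
Proof.
move=> h. have [_ h2] := Glb_Rbar_correct E. apply h2 => M hM /=. have := h M hM; lra.
Qed.

Lemma glb_approx (E : R -> Prop) g eps : Glb_Rbar E = RFin g -> 0 < eps ->
  exists M, E M /\ M < g + eps.
Proof.
move=> hg he. apply NNPP => hn.
have [_ h2] := Glb_Rbar_correct E. rewrite hg in h2.
have : Rbar_le (RFin (g + eps)) (RFin g).
  apply h2 => M hM /=. case: (Rle_lt_dec (g + eps) M) => // hlt.
  exfalso; apply hn; by exists M.
move=> /= ; lra.
Qed.

Lemma glb_le (E : R -> Prop) M : E M -> Rbar_le (Glb_Rbar E) (RFin M).
Proof. move=> hM. have [h1 _] := Glb_Rbar_correct E. exact: h1. Qed.

Lemma rbar_eps (h : Rbar) B c : 0 <= c -> (forall eps, 0 < eps -> Rbar_le h (RFin (B + c * eps))) ->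
  Rbar_le h (RFin B).
Proof.
move=> hc H. case: h H => [h'| |] H /=.
- case: (Rle_lt_dec h' B) => // hlt.
  have he : 0 < (h' - B) / (c + 1) by apply Rdiv_lt_0_compat; lra.
  have := H _ he => /=.
  have : c * ((h' - B) / (c + 1)) < (h' - B).
    have -> : c * ((h' - B) / (c + 1)) = (h' - B) * (c / (c + 1)) by field; lra.
    have : c / (c + 1) < 1 by apply (Rmult_lt_reg_r (c + 1)); [lra| rewrite /Rdiv Rmult_assoc Rinv_l; lra].
    nra.
  lra.
- by have := H 1 Rlt_0_1.
- done.
Qed.

Theorem lemma3p4 :
  forall (d : nat) (s : 'I_d -> nat) (eta alpha : R),
    (forall i, (0 < s i)%N) ->
    (0 < alpha)%R -> (alpha < eta)%R ->
    (forall n : nat, alpha <> INR n) ->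
    exists K : R, (0 < K)%R /\
      forall (D : pt d -> Prop) (U : pt d -> pt d -> C),
        (forall x y : pt d, D x -> D y -> x <> y ->
           forall rho : 'I_d -> nat, (forall j, (0 < rho j)%N) ->
             D (fun j => (y j + (INR (rho j) * sdist s x y) ^ (s j))%R)) ->
        germ s D U ->
        Rbar_lt (Rbar_plus (Gnorm s D eta U) (Gsemi s D eta alpha U)) p_infty ->
        forall Rr : R, (0 < Rr)%R ->
          forall x : pt d, D x ->
            Rbar_le (Holder s (fun z => D z /\ sball s x Rr z) alpha (U x))
              (Rbar_mult (Rbar_mult (Coquelicot.Rbar.Finite K)
                   (Rbar_plus (Gnorm s D eta U) (Gsemi s D eta alpha U)))
                 (Coquelicot.Rbar.Finite (rpow Rr (eta - alpha)))).
Proof.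
move=> d s eta alpha hs ha hae _.
have [K0 [hK0 hcore]] := core hs ha hae.
exists K0; split => // D U hgrid _ hfin Rr hR x hx.
have hn0 : Rbar_le (RFin 0) (Gnorm s D eta U) by apply glb_nonneg => M [].
have hs0 : Rbar_le (RFin 0) (Gsemi s D eta alpha U) by apply glb_nonneg => M [].
have [gn [gs [egn egs]]] : exists gn gs, Gnorm s D eta U = RFin gn /\ Gsemi s D eta alpha U = RFin gs.
  move: hfin hn0 hs0. case: (Gnorm s D eta U) => [a| |]; case: (Gsemi s D eta alpha U) => [b| |] //=;
  try by move=> *; eauto.
rewrite egn egs /=.
have hE1 : 0 < rpow Rr (eta - alpha) by apply rpow_pos.
apply (@rbar_eps _ _ (K0 * 2 * rpow Rr (eta - alpha))); first by apply Rlt_le, Rmult_lt_0_compat; lra.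
move=> eps heps.
have [Mn [[hMn hN] hMn']] := glb_approx egn heps.
have [Ms [[hMs hS] hMs']] := glb_approx egs heps.
apply: Rbar_le_trans (glb_le (M := K0 * (Mn + Ms) * rpow Rr (eta - alpha)) _) _.
  split; first by repeat apply Rmult_lt_0_compat => //; lra.
  move=> y [hy hyR].
  have [c hc] := hcore D U Mn Ms Rr x y hgrid hMn hMs hN hS hR hx hy hyR.
  exists c => z [hz hzR]. exact: hc.
rewrite /=. 
have -> : K0 * (gn + gs) * rpow Rr (eta - alpha) + K0 * 2 * rpow Rr (eta - alpha) * eps
   = K0 * (gn + eps + (gs + eps)) * rpow Rr (eta - alpha) by ring.
apply Rmult_le_compat_r; first lra. apply Rmult_le_compat_l; lra.
Qed.
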